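(* Let $V:\mathbb R^3\to\mathbb R$ be in $L^\infty_{loc}(\mathbb R^3)$ with $\operatorname{ess\,inf}V>0$, let $\varepsilon>0$, and assume $W_\varepsilon$ embeds compactly into $L^p(\mathbb R^3)$ for every $p\in(2,6)$. Let $f:\mathbb R\to\mathbb R$ be continuous, satisfying either ($f(u)\ge0$ for $u\ge0$ and $f(u)=0$ for $u\le0$) or ($f$ odd and $f(u)\ge0$ for $u\ge0$), and such that there is $q\in(2,6)$ with $\lim_{u\to\infty}f(u)/u^{q-1}=0$ and $\lim_{u\to0}f(u)/u=0$. Then $$\mathfrak m_\varepsilon:=\inf_{u\in\mathcal M_\varepsilon}I_\varepsilon(u)>0.$$
   Context: $F(t)=\int_0^tf(s)\,ds$. $W_\varepsilon:=\{u\in H^1(\mathbb R^3):\int_{\mathbb R^3}V(\varepsilon x)u^2<\infty\}$ with norm $\|u\|_{W_\varepsilon}^2=\int|\nabla u|^2+\int V(\varepsilon x)u^2$. For $u\in H^1(\mathbb R^3)$, $\phi_u(x)=\int_{\mathbb R^3}\frac{1-e^{-|x-y|}}{|x-y|}u^2(y)\,dy$; $\mathcal M_\varepsilon=\{u\in W_\varepsilon:\int\phi_uu^2=1\}$ and $I_\varepsilon(u)=\frac12\|u\|_{W_\varepsilon}^2+\int_{\mathbb R^3}F(u)$. *)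

(* Defs.v *)
From HB Require Import structures.
From mathcomp Require Import all_boot all_order all_algebra.
From mathcomp Require Import all_classical all_reals all_analysis.
Set Implicit Arguments. Unset Strict Implicit. Unset Printing Implicit Defensive.
Import Order.TTheory GRing.Theory Num.Theory.
Import numFieldNormedType.Exports.
Local Open Scope classical_set_scope.
Local Open Scope ring_scope.

Section Defs.
Variable R : realType.

Definition pt := (measurableTypeR R * measurableTypeR R * measurableTypeR R)%type.

Definition mu3 := ((@lebesgue_measure R \x @lebesgue_measure R) \x @lebesgue_measure R)%E.

Definition c1 (x : pt) : R := x.1.1.
Definition c2 (x : pt) : R := x.1.2.
Definition c3 (x : pt) : R := x.2.
Definition mkpt (a b c : R) : pt := ((a, b), c).

Definition enorm (x : pt) : R := Num.sqrt (c1 x ^+ 2 + c2 x ^+ 2 + c3 x ^+ 2).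
Definition edist (x y : pt) : R :=
  enorm (mkpt (c1 x - c1 y) (c2 x - c2 y) (c3 x - c3 y)).
Definition scalept (e : R) (x : pt) : pt := mkpt (e * c1 x) (e * c2 x) (e * c3 x).

Definition shift (i : 'I_3) (x : pt) (t : R) : pt :=
  mkpt (c1 x + (if val i == 0%N then t else 0))
       (c2 x + (if val i == 1%N then t else 0))
       (c3 x + (if val i == 2%N then t else 0)).

Definition partial (i : 'I_3) (phi : pt -> R) : pt -> R :=
  fun x => derive1 (fun t => phi (shift i x t)) 0.

Definition iter_partial (s : seq 'I_3) (phi : pt -> R) : pt -> R :=
  foldr partial phi s.

Definition contR3 (g : pt -> R) : Prop :=
  continuous (fun p : R * R * R => g (mkpt p.1.1 p.1.2 p.2)).

Definition test_fun (phi : pt -> R) : Prop :=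
  (forall s : seq 'I_3, contR3 (iter_partial s phi) /\
     forall (i : 'I_3) (x : pt), derivable (fun t => iter_partial s phi (shift i x t)) 0 1)
  /\ exists M : R, forall x : pt, M < enorm x -> phi x = 0.

Local Open Scope ereal_scope.

Definition L2fun (u : pt -> R) : Prop :=
  measurable_fun setT u /\ \int[mu3]_x ((u x) ^+ 2)%:E < +oo.

Definition H1_grad (u : pt -> R) (g : 'I_3 -> pt -> R) : Prop :=
  L2fun u /\ (forall i, L2fun (g i)) /\
  forall phi, test_fun phi -> forall i : 'I_3,
    \int[mu3]_x ((u x * partial i phi x)%R)%:E =
    - \int[mu3]_x ((g i x * phi x)%R)%:E.

Definition Vpart (V : pt -> R) (eps : R) (u : pt -> R) : \bar R :=
  \int[mu3]_x ((V (scalept eps x) * (u x) ^+ 2)%R)%:E.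

Definition Wnorm2 (V : pt -> R) (eps : R) (u : pt -> R) (g : 'I_3 -> pt -> R) : \bar R :=
  (\sum_(i < 3) \int[mu3]_x ((g i x) ^+ 2)%:E) + Vpart V eps u.

Definition in_W (V : pt -> R) (eps : R) (u : pt -> R) (g : 'I_3 -> pt -> R) : Prop :=
  H1_grad u g /\ Vpart V eps u < +oo.

Definition Lp_dist (p : R) (u v : pt -> R) : \bar R :=
  \int[mu3]_x ((`|u x - v x| `^ p)%R)%:E.

Definition compact_embed (V : pt -> R) (eps p : R) : Prop :=
  (forall u g, in_W V eps u g -> \int[mu3]_x ((`|u x| `^ p)%R)%:E < +oo) /\
  forall (u : nat -> pt -> R) (g : nat -> 'I_3 -> pt -> R) (C : R),
    (forall n, in_W V eps (u n) (g n)) ->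
    (forall n, Wnorm2 V eps (u n) (g n) <= C%:E) ->
    exists (sub : nat -> nat) (v : pt -> R),
      (forall n m, (n < m)%N -> (sub n < sub m)%N) /\
      measurable_fun setT v /\ \int[mu3]_x ((`|v x| `^ p)%R)%:E < +oo /\
      (fun n => Lp_dist p (u (sub n)) v) @ \oo --> 0.

Definition phiu (u : pt -> R) (x : pt) : \bar R :=
  \int[mu3]_y (((1 - expR (- edist x y)) / edist x y * (u y) ^+ 2)%R)%:E.

Definition coulomb (u : pt -> R) : \bar R :=
  \int[mu3]_x (phiu u x * ((u x) ^+ 2)%:E).

Definition primF (f : R -> R) (t : R) : R :=
  if (0 <= t)%R then (\int[@lebesgue_measure R]_(s in `[0%R, t]) f s)%R
  else (- \int[@lebesgue_measure R]_(s in `[t, 0%R]) f s)%R.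

Definition Ieps (V : pt -> R) (eps : R) (f : R -> R) (u : pt -> R) (g : 'I_3 -> pt -> R) : \bar R :=
  (2^-1)%:E * Wnorm2 V eps u g + \int[mu3]_x (primF f (u x))%:E.

Definition m_eps (V : pt -> R) (eps : R) (f : R -> R) : \bar R :=
  ereal_inf [set Ieps V eps f ug.1 ug.2 | ug in
     [set ug : (pt -> R) * ('I_3 -> pt -> R) |
        in_W V eps ug.1 ug.2 /\ coulomb ug.1 = 1]].

End Defs.

(* Main.v *)
Require Import Defs.
From HB Require Import structures.
From mathcomp Require Import all_boot all_order all_algebra.
From mathcomp Require Import all_classical all_reals all_analysis.
From mathcomp Require Import measurable_realfun.
From mathcomp Require Import lra.
Import Order.TTheory GRing.Theory Num.Theory.
Import numFieldNormedType.Exports.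
Local Open Scope classical_set_scope.
Local Open Scope ring_scope.

Section Helpers.
Local Open Scope ereal_scope.

Lemma le_int_nm d (T : measurableType d) (R : realType) (mu : {measure set T -> \bar R}) (f1 f2 : T -> \bar R) :
 (forall x, 0 <= f1 x) -> (forall x, f1 x <= f2 x) -> \int[mu]_x f1 x <= \int[mu]_x f2 x.
Proof.
move=> f10 f12.
have f20 x : 0 <= f2 x by exact: le_trans (f10 x) (f12 x).
rewrite !ge0_integralE //.
apply: ge_ereal_sup => _ [h hf <-]; apply: ereal_sup_ubound; exists h => //= x.
apply: le_trans (hf x) _; rewrite /patch; case: ifP => // _; exact: f12.
Qed.
Lemma int_comp_scale d (T : measurableType d) (R : realType) (m : {measure set T -> \bar R}) (s : T -> T) (k : {nonneg R}) (ms : measurable_fun setT s) :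
 (forall A, measurable A -> m (s @^-1` A) = k%:num%:E * m A) ->
 forall phi : T -> \bar R, measurable_fun setT phi -> (forall x, 0 <= phi x) ->
 \int[m]_x phi (s x) = k%:num%:E * \int[m]_x phi x.
Proof.
move=> hs phi mphi phi0.
have := @ge0_integral_pushforward _ _ T T R s ms m setT phi measurableT _ (fun y _ => phi0 y).
rewrite preimage_setT => <-.
rewrite -ge0_integral_mscale //.
apply: (@eq_measure_integral _ _ _ setT (mscale k m) (pushforward m s)) => A mA _.
  by change (m (s @^-1` A) = k%:num%:E * m A); exact: hs.
exact: mphi.
Qed.

Lemma prod_scale d1 d2 (T1 : measurableType d1) (T2 : measurableType d2) (R : realType)
  (m1 : {measure set T1 -> \bar R}) (m2 : {sigma_finite_measure set T2 -> \bar R})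
  (s1 : T1 -> T1) (s2 : T2 -> T2) (k1 k2 : {nonneg R}) :
  measurable_fun setT s1 -> measurable_fun setT s2 ->
  (forall A, measurable A -> m1 (s1 @^-1` A) = k1%:num%:E * m1 A) ->
  (forall A, measurable A -> m2 (s2 @^-1` A) = k2%:num%:E * m2 A) ->
  forall A, measurable A ->
    (m1 \x m2) ((fun p => (s1 p.1, s2 p.2)) @^-1` A) = (k1%:num * k2%:num)%:E * (m1 \x m2) A.
Proof.
move=> ms1 ms2 hs1 hs2 A mA.
rewrite /product_measure1.
transitivity (\int[m1]_x (k2%:num%:E * (m2 \o xsection A) (s1 x))).
  apply: eq_integral => x _ /=; rewrite -hs2; last exact: measurable_xsection.
  congr (m2 _); apply/seteqP; split => y /=; rewrite /xsection /preimage /= !inE //.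
have mph : measurable_fun setT (m2 \o xsection A) by exact: measurable_fun_xsection.
rewrite ge0_integralZl_EFin //; last first.
  exact: measurableT_comp mph ms1.
rewrite (@int_comp_scale _ _ _ _ _ _ ms1 hs1) //.
by rewrite muleA -EFinM mulrC.
Qed.

End Helpers.

Lemma leb_scale (R : realType) (e : R) (he : 0 < e) (A : set R) : measurable A ->
  lebesgue_measure ((fun x => e * x) @^-1` A) = ((e^-1)%:E * lebesgue_measure A)%E.
Proof.
have ms : measurable_fun (setT : set (measurableTypeR R)) (fun x : measurableTypeR R => e * x : measurableTypeR R) by apply: mulrl_measurable.
pose k : {nonneg R} := NngNum (ltW he).
move=> mA.
pose pm : {measure set (measurableTypeR R) -> \bar R} := measure_function_pushforward__canonical__measure_function_Measure (@lebesgue_measure R) ms.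
pose pk : {measure set (measurableTypeR R) -> \bar R} := mscale k pm.
have := @lebesgue_measure_unique R pk _ A mA.
move=> h; rewrite h; last first.
  move=> _ [[a b] _ <-] /=.
  have -> : pk `]a, b]%classic = (e%:E * lebesgue_measure ((fun x => (e * x)%R) @^-1` `]a, b]%classic))%E by [].
  have -> : (fun x => e * x) @^-1` `]a, b]%classic = `]a / e, b / e]%classic.
    by apply/seteqP; split => x /=; rewrite !in_itv /= ltr_pdivrMr // ler_pdivlMr // (mulrC x e).
  rewrite !lebesgue_measure_itv /= !lte_fin ltr_pM2r ?invr_gt0 //.
  case: ifP => _; last by rewrite mule0.
  by rewrite -EFinM mulrBr !(mulrC e) !divfK ?gt_eqF.
have -> : pk A = (e%:E * lebesgue_measure ((fun x => (e*x)%R) @^-1` A))%E by [].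
by rewrite muleA -EFinM mulVf ?gt_eqF // mul1e.
Qed.

Lemma kern_bounds (R : realType) (d : R) : 0 <= d -> 0 <= (1 - expR (- d)) / d <= 1.
Proof.
rewrite le_eqVlt => /orP[/eqP <-|d0]; first by rewrite invr0 mulr0 lexx ler01.
have h1 : expR (- d) <= 1 by rewrite expR_le1 oppr_le0 ltW.
have h2 := expR_ge1Dx (- d).
apply/andP; split.
  by apply: divr_ge0; [rewrite subr_ge0|exact: ltW].
by rewrite ler_pdivrMr // mul1r; lra.
Qed.

Lemma ge1_sq (R : realType) (x : \bar R) : (0 <= x)%E -> (1 <= x * x)%E -> (1 <= x)%E.
Proof.
case: x => [a| |] // a0 h; rewrite lee_fin; rewrite lee_fin in a0; rewrite -EFinM lee_fin in h; nra.
Qed.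
Theorem lemma2p7 (R : realType) (V : pt R -> R) (eps : R) (f : R -> R) (q : R) :
  measurable_fun setT V ->
  (forall r : R, exists C : R, {ae @mu3 R, forall x, enorm x <= r -> `|V x| <= C}) ->
  (exists c : R, 0 < c /\ {ae @mu3 R, forall x, c <= V x}) ->
  0 < eps ->
  (forall p : R, 2 < p < 6 -> compact_embed V eps p) ->
  continuous f ->
  ((forall u, 0 <= u -> 0 <= f u) /\ (forall u, u <= 0 -> f u = 0)
   \/ (forall u, f (- u) = - f u) /\ (forall u, 0 <= u -> 0 <= f u)) ->
  2 < q < 6 ->
  f u / u `^ (q - 1) @[u --> +oo] --> 0 ->
  f u / u @[u --> 0^'] --> 0 ->
  (0 < m_eps V eps f)%E.
Proof.
move=> mV _ [c [c0 hc]] eps0 _ _ hf _ _ _.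
have fpos : forall s, 0 <= s -> 0 <= f s by case: hf => [[]|[]].
have fneg : forall s, s <= 0 -> f s <= 0.
  case: hf => [[_ h] s s0|[ho hp] s s0]; first by rewrite h.
  by rewrite -[s]opprK ho oppr_le0 hp // oppr_ge0.
have F0 : forall t, 0 <= primF f t.
  move=> t; rewrite /primF; case: ifPn => t0.
    apply: fine_ge0; apply: integral_ge0 => s /=; rewrite in_itv /= => /andP[s0 _].
    by rewrite lee_fin fpos.
  rewrite oppr_ge0; apply: fine_le0.
  rewrite (eq_integral (fun x : measurableTypeR R => - ((- f x)%:E))%E); last by move=> x _; rewrite EFinN oppeK.
  rewrite integral_ge0N; last first.
    move=> s /=; rewrite in_itv /= => /andP[_ s0]; by rewrite lee_fin oppr_ge0 fneg.
  rewrite oppe_le0; apply: integral_ge0 => s /=; rewrite in_itv /= => /andP[_ s0].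
  by rewrite lee_fin oppr_ge0 fneg.
apply: (@lt_le_trans _ _ ((c / 2)%:E)); first by rewrite lte_fin divr_gt0.
apply: le_ereal_inf_tmp => _ [[u g] /= [hW hC] <-].
case: hW => [[[mu_ _] _] _].
set A := (\int[@mu3 R]_x ((u x) ^+ 2)%:E)%E.
have mu2 : measurable_fun setT (fun x => ((u x) ^+ 2)%:E).
  by apply/measurable_EFinP; exact: measurable_funX.
have A0 : (0 <= A)%E by apply: integral_ge0 => x _; rewrite lee_fin sqr_ge0.
have phib : forall x, (0 <= phiu u x)%E /\ (phiu u x <= A)%E.
  move=> x; have kb y := @kern_bounds R (Defs.edist x y) (sqrtr_ge0 _).
  split.
    apply: integral_ge0 => y _; rewrite lee_fin mulr_ge0 ?sqr_ge0 //.
    by case/andP: (kb y).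
  apply: le_int_nm => y; rewrite lee_fin.
    by rewrite mulr_ge0 ?sqr_ge0 //; case/andP: (kb y).
  by rewrite ler_piMl ?sqr_ge0 //; case/andP: (kb y).
have A1 : (1 <= A)%E.
  apply: ge1_sq => //; rewrite -hC /coulomb.
  apply: (@le_trans _ _ (\int[@mu3 R]_x (A * ((u x) ^+ 2)%:E))%E).
    apply: le_int_nm => x.
      by apply: mule_ge0; [case: (phib x)|rewrite lee_fin sqr_ge0].
    by apply: lee_wpmul2r; [rewrite lee_fin sqr_ge0|case: (phib x)].
  rewrite ge0_integralZl //.
  by move=> x _; rewrite lee_fin sqr_ge0.
have ms2 : measurable_fun setT (fun x : measurableTypeR R => eps * x) by apply: mulrl_measurable.
have ms : measurable_fun setT (scalept eps : pt R -> pt R).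
  rewrite /scalept /mkpt /c1 /c2 /c3.
  apply: measurable_fun_pair; first apply: measurable_fun_pair.
  - exact: measurableT_comp ms2 (measurableT_comp measurable_fst measurable_fst).
  - exact: measurableT_comp ms2 (measurableT_comp measurable_snd measurable_fst).
  - exact: measurableT_comp ms2 measurable_snd.
have ie0 : 0 < eps^-1 by rewrite invr_gt0.
pose k : {nonneg R} := NngNum (ltW ie0).
have h1 : forall A, measurable A -> lebesgue_measure ((fun x : measurableTypeR R => eps * x) @^-1` A) = (k%:num%:E * lebesgue_measure A)%E.
  by move=> B mB; exact: (@leb_scale R eps eps0 B mB).
pose kk : {nonneg R} := NngNum (mulr_ge0 (ltW ie0) (ltW ie0)).
have ms1 : measurable_fun setT (fun p : measurableTypeR R * measurableTypeR R => (eps * p.1, eps * p.2)).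
  apply: measurable_fun_pair.
  - exact: measurableT_comp ms2 measurable_fst.
  - exact: measurableT_comp ms2 measurable_snd.
have hs1 := @prod_scale _ _ _ _ R (@lebesgue_measure R) (@lebesgue_measure R) _ _ k k ms2 ms2 h1 h1.
have sN : forall N, measurable N -> @mu3 R N = 0%E -> @mu3 R (scalept eps @^-1` N) = 0%E.
  move=> N mN N0.
  have H := (@prod_scale _ _ _ _ R (@lebesgue_measure R \x @lebesgue_measure R)%E (@lebesgue_measure R) _ _ kk k ms1 ms2 hs1 h1 N mN).
  have N0' : ((@lebesgue_measure R \x @lebesgue_measure R) \x @lebesgue_measure R)%E N = 0%E by exact: N0.
  rewrite N0' mule0 in H; exact: H.
have mVs : measurable_fun setT (fun x => V (scalept eps x)) := measurableT_comp mV ms.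
have VP : (c%:E * A <= Vpart V eps u)%E.
  case: hc => N [mN N0 sub].
  rewrite /Vpart (ae_eq_integral (fun x => ((Num.max (V (scalept eps x)) c) * u x ^+ 2)%:E)) //.
  - rewrite /A -ge0_integralZl_EFin //; last 2 first.
      by move=> x _; rewrite lee_fin sqr_ge0.
      exact: ltW.
    apply: le_int_nm => x; rewrite -EFinM lee_fin.
      by rewrite mulr_ge0 ?sqr_ge0 // ltW.
    by rewrite ler_wpM2r ?sqr_ge0 // le_max lexx orbT.
  - apply/measurable_EFinP; apply: measurable_funM => //; exact: measurable_funX.
  - apply/measurable_EFinP; apply: measurable_funM => //; last exact: measurable_funX.
    exact: measurable_maxr.
  - exists (scalept eps @^-1` N); split.
    + by rewrite -[X in measurable X]setTI; exact: ms.
    + exact: sN.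
    + move=> x /= hx; apply: sub => /= hcV; apply: hx => _.
      by rewrite max_l.
have cW : (c%:E <= Wnorm2 V eps u g)%E.
  apply: (@le_trans _ _ (c%:E * A)%E).
    by rewrite -{1}[c%:E]mule1; apply: lee_wpmul2l => //; rewrite lee_fin ltW.
  apply: (le_trans VP); rewrite /Wnorm2; apply: lee_paddl => //.
  by apply: sume_ge0 => i _; apply: integral_ge0 => x _; rewrite lee_fin sqr_ge0.
rewrite /Ieps; apply: lee_paddr.
  by apply: integral_ge0 => x _; rewrite lee_fin F0.
have -> : ((c / 2)%:E = (2^-1)%:E * c%:E)%E by rewrite -EFinM mulrC.
by apply: lee_wpmul2l => //; rewrite lee_fin invr_ge0.
Qed.
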